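(* For all $p,q\in\mathcal{P}$, the germs $pq$ and $p/q$ both belong to $\mathcal{P}$.
   Context: All functions are real-valued functions defined on some interval $(a,\infty)$. Two such functions are identified if they agree for all sufficiently large $x$; these equivalence classes are germs at $+\infty$. Write $\ln^{(k)}$ for the $k$-fold iterated natural logarithm, with $\ln^{(0)}(x)=x$. Let $\mathcal{H}$ be the smallest set of germs at $+\infty$ satisfying: (i) $\ln^{(k)}\in\mathcal{H}$ for every integer $k\ge0$; (ii) if $f\in\mathcal{H}$, then $\exp\circ f\in\mathcal{H}$, and if moreover $f$ is eventually positive, then $f^\alpha\in\mathcal{H}$ for every real $\alpha>0$; (iii) if $f,g\in\mathcal{H}$ and $f\ne g$ (as germs), then $fg\in\mathcal{H}$; (iv) if $f,g\in\mathcal{H}$ and $f(x)/g(x)\to+\infty$, then $f/g\in\mathcal{H}$. Let $\mathcal{P}=\mathcal{H}\cup\{1\}\cup\{1/f:f\in\mathcal{H}\}$, where $1$ is the constant germ. *)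

(* Defs.v *)
From Stdlib Require Import Reals.
Open Scope R_scope.

(* Germs at +infinity are represented by total functions R -> R; a function
   defined only on (a, +oo) is represented by any total extension (only
   values for large x matter). *)

Definition eventually (P : R -> Prop) : Prop :=
  exists a : R, forall x : R, a < x -> P x.

Definition germ_eq (f g : R -> R) : Prop :=
  eventually (fun x => f x = g x).

Definition tends_to_pinfty (f : R -> R) : Prop :=
  forall M : R, eventually (fun x => M < f x).

Fixpoint iter_ln (k : nat) (x : R) : R :=
  match k with
  | O => x
  | S k' => ln (iter_ln k' x)
  end.

(* The class H: smallest set of germs closed under (i)-(iv).
   Since H is a set of germs, membership is invariant under germ equality
   (constructor H_germ). *)
Inductive inH : (R -> R) -> Prop :=
  | H_ln : forall k : nat, inH (iter_ln k)
  | H_exp : forall f, inH f -> inH (fun x => exp (f x))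
  | H_pow : forall f (alpha : R), inH f -> eventually (fun x => 0 < f x) ->
      0 < alpha -> inH (fun x => Rpower (f x) alpha)
  | H_mul : forall f g, inH f -> inH g -> ~ germ_eq f g ->
      inH (fun x => f x * g x)
  | H_div : forall f g, inH f -> inH g ->
      tends_to_pinfty (fun x => f x / g x) -> inH (fun x => f x / g x)
  | H_germ : forall f g, inH f -> germ_eq f g -> inH g.

Definition inP (p : R -> R) : Prop :=
  inH p \/ germ_eq p (fun _ => 1)
  \/ exists f, inH f /\ germ_eq p (fun x => 1 / f x).

(* Main.v *)
Require Import Defs.
From Stdlib Require Import Reals Lra Lia List Classical.
From Coquelicot Require Import Coquelicot.
Open Scope R_scope.
Notation ev := Defs.eventually.

Lemma ev_and (P Q : R -> Prop) : ev P -> ev Q -> ev (fun x => P x /\ Q x).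
Proof. intros [a Ha] [b Hb]. exists (Rmax a b). intros x Hx.
  pose proof (Rmax_l a b); pose proof (Rmax_r a b). split; [apply Ha|apply Hb]; lra. Qed.

Lemma ev_mono (P Q : R -> Prop) : ev P -> (forall x, P x -> Q x) -> ev Q.
Proof. intros [a Ha] H. exists a. auto. Qed.

Lemma germ_refl f : germ_eq f f.
Proof. exists 0. auto. Qed.
Lemma germ_sym f g : germ_eq f g -> germ_eq g f.
Proof. intros H. apply (ev_mono _ _ H). auto. Qed.
Lemma germ_trans f g h : germ_eq f g -> germ_eq g h -> germ_eq f h.
Proof. intros H1 H2. apply (ev_mono _ _ (ev_and _ _ H1 H2)). intros x [-> ->]; auto. Qed.

Lemma tends_is_lim f : tends_to_pinfty f <-> is_lim f p_infty p_infty.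
Proof. split.
- intros H P [M HM]. destruct (H M) as [a Ha]. exists a. intros x Hx. apply HM, Ha, Hx.
- intros H M. apply (H (fun y => M < y)). exists M; auto.
Qed.

Lemma tends_germ f g : tends_to_pinfty f -> germ_eq f g -> tends_to_pinfty g.
Proof. intros H Hg M. apply (ev_mono _ _ (ev_and _ _ (H M) Hg)). intros x [A B]. congruence. Qed.

Lemma tends_pos f : tends_to_pinfty f -> ev (fun x => 0 < f x).
Proof. intros H; exact (H 0). Qed.

Lemma tends_comp f g : tends_to_pinfty f -> tends_to_pinfty g -> tends_to_pinfty (fun x => f (g x)).
Proof. intros Hf Hg M. destruct (Hf M) as [a Ha]. destruct (Hg a) as [b Hb].
  exists b; intros; apply Ha, Hb; auto. Qed.

Lemma tends_id : tends_to_pinfty (fun x => x).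
Proof. intros M; exists M; auto. Qed.
Lemma tends_exp : tends_to_pinfty exp.
Proof. apply tends_is_lim, is_lim_exp_p. Qed.
Lemma tends_ln : tends_to_pinfty ln.
Proof. apply tends_is_lim, is_lim_ln_p. Qed.

Lemma tends_mul f g : tends_to_pinfty f -> tends_to_pinfty g -> tends_to_pinfty (fun x => f x * g x).
Proof. intros Hf Hg M. apply (ev_mono _ _ (ev_and _ _ (Hf (Rabs M + 1)) (Hg 1))).
  intros x [A B]. pose proof (Rle_abs M). pose proof (Rabs_pos M). nra. Qed.

Lemma tends_scal a f : 0 < a -> tends_to_pinfty f -> tends_to_pinfty (fun x => a * f x).
Proof. intros Ha Hf M. apply (ev_mono _ _ (Hf (M / a))). intros x Hb.
  apply Rmult_lt_compat_l with (r:=a) in Hb; auto.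
  replace (a*(M/a)) with M in Hb by (field; lra). lra. Qed.

Lemma tends_rpow f al : 0 < al -> tends_to_pinfty f -> tends_to_pinfty (fun x => Rpower (f x) al).
Proof. intros. unfold Rpower. apply (tends_comp exp (fun x => al * ln (f x))). apply tends_exp.
  apply (tends_scal al (fun x => ln (f x))); auto. apply (tends_comp ln f); auto using tends_ln. Qed.

Lemma tends_iter_ln k : tends_to_pinfty (iter_ln k).
Proof. induction k. apply tends_id. change (tends_to_pinfty (fun x => ln (iter_ln k x))).
  apply (tends_comp ln (iter_ln k)); auto using tends_ln. Qed.

Lemma inH_tends f : inH f -> tends_to_pinfty f.
Proof. induction 1.
- apply tends_iter_ln.
- apply (tends_comp exp f); auto using tends_exp.
- apply tends_rpow; auto.
- apply tends_mul; auto.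
- auto.
- eapply tends_germ; eauto.
Qed.

Lemma tends_y_lny : tends_to_pinfty (fun y => y / ln y).
Proof. apply tends_germ with (fun y => exp (ln y) / ln y).
  - apply (tends_comp (fun y => exp y / y) ln). apply tends_is_lim, is_lim_div_exp_p. apply tends_ln.
  - exists 0. intros x Hx. rewrite exp_ln; auto. Qed.

Lemma tends_ln_ratio j d : tends_to_pinfty (fun x => iter_ln j x / iter_ln (S j + d) x).
Proof. induction d.
- rewrite Nat.add_0_r. change (tends_to_pinfty (fun x => (fun y => y / ln y) (iter_ln j x))).
  apply tends_comp. apply tends_y_lny. apply tends_iter_ln.
- set (m := (S j + d)%nat) in *.
  apply tends_germ with (fun x => (iter_ln j x / iter_ln m x) * (fun y => y / ln y) (iter_ln m x)).
  + apply tends_mul; auto. apply (tends_comp (fun y => y / ln y)). apply tends_y_lny. apply tends_iter_ln.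
  + apply (ev_mono _ _ (ev_and _ _ (tends_pos _ (tends_iter_ln m)) (tends_pos _ (tends_iter_ln (S m))))).
    intros x [A B]. assert (Hm : (S j + S d = S m)%nat) by (unfold m; simpl; lia). rewrite Hm. change (iter_ln (S m) x) with (ln (iter_ln m x)) in B |- *.
    field. split; lra.
Qed.

Definition cmp (a b : R -> R) := germ_eq a b \/ tends_to_pinfty (fun x => a x / b x)
  \/ tends_to_pinfty (fun x => b x / a x).

Lemma cmp_iter j k : cmp (iter_ln j) (iter_ln k).
Proof. destruct (Compare_dec.lt_eq_lt_dec j k) as [[H|H]|H].
- right; left. replace k with (S j + (k - S j))%nat by lia. apply tends_ln_ratio.
- subst; left; apply germ_refl.
- right; right. replace j with (S k + (j - S k))%nat by lia. apply tends_ln_ratio.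
Qed.
Definition term := (R * (R -> R))%type.

Fixpoint sumL (l : list term) (x : R) : R :=
  match l with nil => 0 | t :: r => fst t * snd t x + sumL r x end.

Fixpoint distinct (l : list term) : Prop :=
  match l with nil => True
  | t :: r => List.Forall (fun u => ~ germ_eq (snd t) (snd u)) r /\ distinct r end.

Section LC.
Variable A : (R -> R) -> Prop.
Hypothesis HA1 : forall a, A a -> tends_to_pinfty a.
Hypothesis HA2 : forall a b, A a -> A b -> cmp a b.

Definition good (l : list term) := List.Forall (fun t => A (snd t) /\ fst t <> 0) l /\ distinct l.

Lemma insert_ok c a l : A a -> good l -> exists l', good l' /\
  germ_eq (sumL l') (fun x => c * a x + sumL l x) /\
  (forall t, In t l' -> snd t = a \/ exists t', In t' l /\ snd t' = snd t).
Proof.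
  intros Ha. induction l as [|[d b] r IH]; intros Hg.
  - destruct (Req_dec c 0) as [Hc|Hc].
    + exists nil. split; [split; simpl; auto|]. split.
      * exists 0. intros; subst; simpl; ring.
      * intros t [].
    + exists ((c,a)::nil). split; [split; simpl; auto|]. split.
      * apply germ_refl.
      * intros t [<-|[]]; left; reflexivity.
  - destruct Hg as [Hf [Hd Hdr]]. inversion Hf as [|? ? [Hb Hd0] Hfr]; subst. simpl in *.
    destruct (classic (germ_eq a b)) as [Hab|Hab].
    + destruct (Req_dec (c + d) 0) as [Hcd|Hcd].
      * exists r. split; [split; auto|]. split.
        -- apply (ev_mono _ _ Hab). intros x Hx. rewrite Hx. simpl. replace d with (-c) by lra. ring.
        -- intros t Ht. right. exists t. split; auto.
      * exists ((c+d,b)::r). split; [split; simpl; auto|]. split.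
        -- apply (ev_mono _ _ Hab). intros x Hx. simpl. rewrite Hx. ring.
        -- intros t [<-|Ht]; right. exists (d,b); simpl; auto. exists t; auto.
    + destruct (IH (conj Hfr Hdr)) as [r' [[Hf' Hd'] [Hs Hin]]].
      exists ((d,b)::r'). split; [split; simpl|]. constructor; auto. split; auto.
      * apply List.Forall_forall. intros u Hu. destruct (Hin u Hu) as [E|[t' [Ht' E]]].
        -- rewrite E. intro G. apply Hab, germ_sym, G.
        -- rewrite <- E. rewrite List.Forall_forall in Hd. apply Hd; auto.
      * split.
        -- apply (ev_mono _ _ Hs). intros x Hx. simpl. rewrite Hx. ring.
        -- intros t [<-|Ht]. right. exists (d,b); auto.
           destruct (Hin t Ht) as [E|[t' [Ht' E]]]; auto. right; exists t'; auto.
Qed.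

Lemma normalize l : List.Forall (fun t => A (snd t)) l -> exists l', good l' /\ germ_eq (sumL l) (sumL l').
Proof.
  induction l as [|[c a] r IH]; intros H.
  - exists nil. split. split; simpl; auto. apply germ_refl.
  - inversion H; subst. destruct (IH H3) as [r' [Hg Hs]].
    destruct (insert_ok c a r' H2 Hg) as [l'' [Hg' [Hs' _]]].
    exists l''. split; auto. apply germ_sym. eapply germ_trans. apply Hs'.
    apply (ev_mono _ _ Hs). intros x Hx. simpl. rewrite Hx. reflexivity.
Qed.

Lemma dominant l : good l -> l <> nil -> exists t, In t l /\
  is_lim (fun x => sumL l x / snd t x) p_infty (fst t).
Proof.
  induction l as [|[c0 a0] r IH]; intros Hg Hn. congruence.
  destruct Hg as [Hf [Hd Hdr]]. inversion Hf as [|? ? [Ha0 Hc0] Hfr]; subst. simpl in *.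
  destruct r as [|t1 r1].
  - exists (c0,a0). split; auto. simpl.
    apply is_lim_ext_loc with (fun _ => c0). 2: apply is_lim_const.
    apply (ev_mono _ _ (tends_pos _ (HA1 _ Ha0))). intros x Hx. simpl. field. lra.
  - destruct (IH (conj Hfr Hdr)) as [[c a] [Ht Hl]]. congruence.
    simpl in Hl. rewrite List.Forall_forall in Hfr, Hd.
    destruct (Hfr _ Ht) as [Ha Hc]. simpl in Ha.
    assert (Hne := Hd _ Ht). simpl in Hne.
    set (S := sumL (t1 :: r1)) in *.
    assert (Hp := ev_and _ _ (tends_pos _ (HA1 _ Ha0)) (tends_pos _ (HA1 _ Ha))).
    destruct (HA2 _ _ Ha0 Ha) as [G|[G|G]]. contradiction.
    + exists (c0,a0). split; auto. simpl.
      apply is_lim_ext_loc with (fun x => c0 + (S x / a x) * / (a0 x / a x)).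
      * apply (ev_mono _ _ Hp). intros x [P1 P2]. field. lra.
      * replace (Finite c0) with (Finite (c0 + c * 0)) by (f_equal; ring).
        apply is_lim_plus'. apply is_lim_const.
        apply tends_is_lim in G. apply is_lim_inv in G. 2: discriminate.
        exact (is_lim_mult (fun x => S x / a x) (fun x => / (a0 x / a x)) p_infty c 0 Hl G I).
    + exists (c,a). split; auto. simpl.
      apply is_lim_ext_loc with (fun x => c0 * / (a x / a0 x) + S x / a x).
      * apply (ev_mono _ _ Hp). intros x [P1 P2]. field. lra.
      * replace (Finite c) with (Finite (c0 * 0 + c)) by (f_equal; ring).
        apply is_lim_plus'. 2: exact Hl.
        apply (is_lim_scal_l _ c0 _ 0).
        apply tends_is_lim in G. apply is_lim_inv in G. exact G. discriminate.
Qed.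

Lemma LC l : List.Forall (fun t => A (snd t)) l ->
  germ_eq (sumL l) (fun _ => 0) \/ tends_to_pinfty (sumL l) \/ tends_to_pinfty (fun x => - sumL l x).
Proof.
  intros H. destruct (normalize l H) as [l' [Hg Hs]].
  destruct l' as [|t r]. left. exact Hs.
  destruct (dominant (t::r) Hg) as [[c a] [Ht Hl]]. congruence.
  destruct Hg as [Hf _]. rewrite List.Forall_forall in Hf. destruct (Hf _ Ht) as [Ha Hc]. simpl in *.
  set (S := sumL (t :: r)) in *.
  assert (Hp := tends_pos _ (HA1 _ Ha)).
  assert (Ta := HA1 _ Ha). apply tends_is_lim in Ta.
  destruct (Rlt_dec 0 c) as [Hc'|Hc'].
  - right; left. apply tends_germ with S. 2: apply germ_sym; exact Hs.
    apply tends_is_lim. apply is_lim_ext_loc with (fun x => (S x / a x) * a x).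
    + apply (ev_mono _ _ Hp). intros x Hx. field. lra.
    + replace p_infty with (Rbar_mult c p_infty) at 2.
      apply is_lim_mult; auto. simpl. auto.
      simpl. destruct (Rle_dec 0 c); [destruct (Rle_lt_or_eq_dec 0 c r0)|]; auto; lra.
  - right; right. apply tends_germ with (fun x => - S x).
    2: apply (ev_mono _ _ Hs); intros x Hx; rewrite Hx; reflexivity.
    apply tends_is_lim. apply is_lim_ext_loc with (fun x => (- (S x / a x)) * a x).
    + apply (ev_mono _ _ Hp). intros x Hx. field. lra.
    + replace p_infty with (Rbar_mult (-c) p_infty) at 2.
      apply is_lim_mult; auto. apply (is_lim_opp _ _ c). auto. simpl. lra.
      simpl. destruct (Rle_dec 0 (-c)); [destruct (Rle_lt_or_eq_dec 0 (-c) r0)|]; auto; lra.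
Qed.
End LC.

Inductive Hn : nat -> (R -> R) -> Prop :=
 | Hn_ln n k : Hn n (iter_ln k)
 | Hn_exp n f : Hn n f -> Hn (S n) (fun x => exp (f x))
 | Hn_pow n f al : Hn n f -> 0 < al -> Hn n (fun x => Rpower (f x) al)
 | Hn_mul n f g : Hn n f -> Hn n g -> Hn n (fun x => f x * g x)
 | Hn_div n f g : Hn n f -> Hn n g -> tends_to_pinfty (fun x => f x / g x) ->
     Hn n (fun x => f x / g x)
 | Hn_germ n f g : Hn n f -> germ_eq f g -> Hn n g
 | Hn_lift n f : Hn n f -> Hn (S n) f.

Lemma Hn_tends n f : Hn n f -> tends_to_pinfty f.
Proof. induction 1.
- apply tends_iter_ln.
- apply (tends_comp exp f); auto using tends_exp.
- apply tends_rpow; auto.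
- apply tends_mul; auto.
- auto.
- eapply tends_germ; eauto.
- auto.
Qed.

Lemma Hn_mono n m f : (n <= m)%nat -> Hn n f -> Hn m f.
Proof. induction 1; auto. intros Hx. apply Hn_lift; auto. Qed.

Lemma inH_Hn f : inH f -> exists n, Hn n f.
Proof. induction 1.
- exists O; constructor.
- destruct IHinH as [n Hn]. exists (S n); constructor; auto.
- destruct IHinH as [n Hn]. exists n; apply Hn_pow; auto.
- destruct IHinH1 as [n1 K1]; destruct IHinH2 as [n2 K2]. exists (Nat.max n1 n2).
  apply Hn_mul; [apply (Hn_mono n1)|apply (Hn_mono n2)]; auto; lia.
- destruct IHinH1 as [n1 K1]; destruct IHinH2 as [n2 K2]. exists (Nat.max n1 n2).
  apply Hn_div; auto; [apply (Hn_mono n1)|apply (Hn_mono n2)]; auto; lia.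
- destruct IHinH as [n Hn]. exists n; econstructor; eauto.
Qed.

Definition Atom n a := match n with O => exists k, a = iter_ln k | S m => Hn m a end.

Lemma atom_tends n a : Atom n a -> tends_to_pinfty a.
Proof. destruct n; simpl. intros [k ->]; apply tends_iter_ln. apply Hn_tends. Qed.

Definition scale (al : R) (l : list term) : list term := map (fun t => (al * fst t, snd t)) l.
Lemma sumL_scale al l x : sumL (scale al l) x = al * sumL l x.
Proof. induction l; simpl; [ring|]. rewrite IHl. simpl. ring. Qed.
Lemma sumL_app l1 l2 x : sumL (l1 ++ l2) x = sumL l1 x + sumL l2 x.
Proof. induction l1; simpl; [ring|]. rewrite IHl1. ring. Qed.
Lemma Forall_scale (P : (R -> R) -> Prop) al l :
  List.Forall (fun t => P (snd t)) l -> List.Forall (fun t => P (snd t)) (scale al l).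
Proof. induction 1; simpl; constructor; auto. Qed.

Lemma Hn_log n f : Hn n f -> exists l, List.Forall (fun t => Atom n (snd t)) l /\
  germ_eq (fun x => ln (f x)) (sumL l).
Proof. induction 1.
- exists ((1, iter_ln (S k)) :: nil). split.
  + constructor; auto. destruct n; [exists (S k); reflexivity|exact (Hn_ln n (S k))].
  + exists 0; intros; simpl; ring.
- exists ((1, f) :: nil). split.
  + constructor; auto.
  + exists 0; intros; simpl. rewrite ln_exp; ring.
- destruct IHHn as [l [Hl Hs]]. exists (scale al l). split.
  + apply Forall_scale; auto.
  + apply (ev_mono _ _ Hs). intros x Hx. unfold Rpower. rewrite ln_exp, sumL_scale, <- Hx. ring.
- destruct IHHn1 as [l1 [F1 S1]]; destruct IHHn2 as [l2 [F2 S2]]. exists (l1 ++ l2). split.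
  + apply List.Forall_app; auto.
  + apply (ev_mono _ _ (ev_and _ _ (ev_and _ _ S1 S2)
      (ev_and _ _ (tends_pos _ (Hn_tends _ _ H)) (tends_pos _ (Hn_tends _ _ H0))))).
    intros x [[A B] [C D]]. rewrite sumL_app, <- A, <- B. apply ln_mult; auto.
- destruct IHHn1 as [l1 [F1 S1]]; destruct IHHn2 as [l2 [F2 S2]]. exists (l1 ++ scale (-1) l2). split.
  + apply List.Forall_app; split; auto. apply Forall_scale; auto.
  + apply (ev_mono _ _ (ev_and _ _ (ev_and _ _ S1 S2)
      (ev_and _ _ (tends_pos _ (Hn_tends _ _ H)) (tends_pos _ (Hn_tends _ _ H0))))).
    intros x [[A B] [C D]]. rewrite sumL_app, sumL_scale, <- A, <- B, ln_div; auto. ring.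
- destruct IHHn as [l [Hl Hs]]. exists l. split; auto.
  eapply germ_trans; [|exact Hs]. apply (ev_mono _ _ H0). intros x Hx. rewrite Hx; auto.
- destruct IHHn as [l [Hl Hs]]. exists l. split; auto.
  eapply List.Forall_impl; [|exact Hl]. intros [c a]; simpl.
  destruct n; simpl. intros [k ->]; apply Hn_ln. apply Hn_lift.
Qed.

Lemma cmp_from_atoms n : (forall a b, Atom n a -> Atom n b -> cmp a b) ->
  forall f g, Hn n f -> Hn n g -> cmp f g.
Proof.
  intros HA f g Hf Hg. destruct (Hn_log _ _ Hf) as [l1 [F1 S1]].
  destruct (Hn_log _ _ Hg) as [l2 [F2 S2]].
  assert (P := ev_and _ _ (ev_and _ _ S1 S2)
      (ev_and _ _ (tends_pos _ (Hn_tends _ _ Hf)) (tends_pos _ (Hn_tends _ _ Hg)))).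
  destruct (LC (Atom n) (atom_tends n) HA (l1 ++ scale (-1) l2)) as [G|[G|G]].
  - apply List.Forall_app; split; auto. apply Forall_scale; auto.
  - left. apply (ev_mono _ _ (ev_and _ _ P G)). intros x [[[A B] [C D]] E].
    rewrite sumL_app, sumL_scale, <- A, <- B in E.
    rewrite <- (exp_ln (f x)), <- (exp_ln (g x)); auto. f_equal. lra.
  - right; left. apply tends_germ with (fun x => exp (sumL (l1 ++ scale (-1) l2) x)).
    apply (tends_comp exp); auto using tends_exp.
    apply (ev_mono _ _ P). intros x [[A B] [C D]].
    rewrite sumL_app, sumL_scale, <- A, <- B.
    replace (ln (f x) + -1 * ln (g x)) with (ln (f x / g x)) by (rewrite ln_div; auto; ring).
    apply exp_ln. apply Rdiv_lt_0_compat; auto.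
  - right; right. apply tends_germ with (fun x => exp (- sumL (l1 ++ scale (-1) l2) x)).
    apply (tends_comp exp (fun x => - sumL (l1 ++ scale (-1) l2) x)); auto using tends_exp.
    apply (ev_mono _ _ P). intros x [[A B] [C D]].
    rewrite sumL_app, sumL_scale, <- A, <- B.
    replace (- (ln (f x) + -1 * ln (g x))) with (ln (g x / f x)) by (rewrite ln_div; auto; ring).
    apply exp_ln. apply Rdiv_lt_0_compat; auto.
Qed.

Lemma Hn_cmp n : forall f g, Hn n f -> Hn n g -> cmp f g.
Proof.
  induction n; apply cmp_from_atoms; simpl.
  - intros a b [j ->] [k ->]. apply cmp_iter.
  - exact IHn.
Qed.

Lemma inH_cmp f g : inH f -> inH g -> cmp f g.
Proof.
  intros Hf Hg. destruct (inH_Hn _ Hf) as [n1 H1]; destruct (inH_Hn _ Hg) as [n2 H2].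
  apply (Hn_cmp (Nat.max n1 n2)); [apply (Hn_mono n1)|apply (Hn_mono n2)]; auto; lia.
Qed.

Lemma inP_germ p q : inP p -> germ_eq p q -> inP q.
Proof.
  intros [H|[H|[f [Hf H]]]] G.
  - left. eapply H_germ; eauto.
  - right; left. eapply germ_trans; [apply germ_sym, G|exact H].
  - right; right. exists f. split; auto. eapply germ_trans; [apply germ_sym, G|exact H].
Qed.

Lemma inP_inv p : inP p -> inP (fun x => 1 / p x).
Proof.
  intros [H|[H|[f [Hf H]]]].
  - right; right. exists p. split; auto. apply germ_refl.
  - right; left. apply (ev_mono _ _ H). intros x Hx. rewrite Hx. field.
  - left. apply H_germ with f; auto.
    apply (ev_mono _ _ (ev_and _ _ H (tends_pos _ (inH_tends _ Hf)))). intros x [A B].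
    rewrite A. field. lra.
Qed.

Lemma HH f g : inH f -> inH g -> inH (fun x => f x * g x).
Proof.
  intros Hf Hg. destruct (classic (germ_eq f g)) as [G|G].
  - apply H_germ with (fun x => Rpower (f x) 2).
    + apply H_pow; auto. apply tends_pos, inH_tends; auto. lra.
    + apply (ev_mono _ _ (ev_and _ _ G (tends_pos _ (inH_tends _ Hf)))). intros x [A B].
      replace 2 with (INR 2) by (simpl; lra). rewrite Rpower_pow; auto. rewrite <- A. simpl. ring.
  - apply H_mul; auto.
Qed.

Lemma mixed f g : inH f -> inH g -> inP (fun x => f x * (1 / g x)).
Proof.
  intros Hf Hg.
  assert (P := ev_and _ _ (tends_pos _ (inH_tends _ Hf)) (tends_pos _ (inH_tends _ Hg))).
  destruct (inH_cmp f g Hf Hg) as [G|[G|G]].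
  - right; left. apply (ev_mono _ _ (ev_and _ _ G P)). intros x [A [B C]]. rewrite A. field. lra.
  - left. apply H_germ with (fun x => f x / g x). apply H_div; auto.
    exists 0; intros; unfold Rdiv; ring.
  - right; right. exists (fun x => g x / f x). split. apply H_div; auto.
    apply (ev_mono _ _ P). intros x [A B]. field. lra.
Qed.

Lemma inP_mul p q : inP p -> inP q -> inP (fun x => p x * q x).
Proof.
  intros Hp Hq.
  destruct Hp as [Hp|[Hp|[f [Hf Hp]]]].
  - destruct Hq as [Hq|[Hq|[g [Hg Hq]]]].
    + left. apply HH; auto.
    + apply inP_germ with p. left; auto. apply (ev_mono _ _ Hq). intros x E; rewrite E; ring.
    + apply inP_germ with (fun x => p x * (1 / g x)). apply mixed; auto.
      apply (ev_mono _ _ Hq). intros x E; rewrite E; ring.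
  - apply inP_germ with q; auto. apply (ev_mono _ _ Hp). intros x E; rewrite E; ring.
  - destruct Hq as [Hq|[Hq|[g [Hg Hq]]]].
    + apply inP_germ with (fun x => q x * (1 / f x)). apply mixed; auto.
      apply (ev_mono _ _ Hp). intros x E; rewrite E; ring.
    + apply inP_germ with p. right; right; eauto. apply (ev_mono _ _ Hq). intros x E; rewrite E; ring.
    + apply inP_germ with (fun x => 1 / (f x * g x)). apply inP_inv. left. apply HH; auto.
      apply (ev_mono _ _ (ev_and _ _ (ev_and _ _ Hp Hq)
        (ev_and _ _ (tends_pos _ (inH_tends _ Hf)) (tends_pos _ (inH_tends _ Hg))))).
      intros x [[A B] [C D]]. rewrite A, B. field. lra.
Qed.

Theorem mainTheorem4 : forall p q : R -> R, inP p -> inP q ->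
  inP (fun x => p x * q x) /\ inP (fun x => p x / q x).
Proof.
  intros p q Hp Hq. split.
  - apply inP_mul; auto.
  - apply inP_germ with (fun x => p x * (1 / q x)). apply inP_mul; auto. apply inP_inv; auto.
    exists 0. intros; unfold Rdiv; ring.
Qed.
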